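(* Let $P$ be a finite poset, $q$ a positive integer, and $f\in\mathrm{Inc}^q(P)$. If $\mathrm{Con}(f)=(a_1,a_2,\dots,a_q)$, then $\mathrm{Con}(\mathrm{IncPro}(f))=(a_2,\dots,a_q,a_1)$.
   Context: $\mathrm{Inc}^q(P)$ is the set of $f:P\to\{1,\dots,q\}$ with $p_1<p_2\Rightarrow f(p_1)<f(p_2)$. The binary content $\mathrm{Con}(f)=(a_1,\dots,a_q)$ has $a_i=1$ if $f(p)=i$ for some $p\in P$ and $a_i=0$ otherwise. For $1\le i\le q-1$, $\rho_i(f)(x)=i+1$ if $f(x)=i$ and changing only the value at $x$ to $i+1$ yields an element of $\mathrm{Inc}^q(P)$; $\rho_i(f)(x)=i$ if $f(x)=i+1$ and changing only the value at $x$ to $i$ yields an element of $\mathrm{Inc}^q(P)$; $\rho_i(f)(x)=f(x)$ otherwise; $\mathrm{IncPro}=\rho_{q-1}\circ\cdots\circ\rho_1$. *)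

(* Defs.v *)
From mathcomp Require Import all_boot all_order.
Set Implicit Arguments. Unset Strict Implicit. Unset Printing Implicit Defensive.
Import Order.TTheory.
Local Open Scope order_scope.

Definition is_inc {d : Order.disp_t} {P : finPOrderType d} (q : nat) (f : P -> nat) : bool :=
  [forall x : P, (1 <= f x)%N && (f x <= q)%N] &&
  [forall x : P, forall y : P, (x < y) ==> (f x < f y)%N].

Definition upd {d : Order.disp_t} {P : finPOrderType d} (f : P -> nat) (x : P) (v : nat) : P -> nat :=
  fun y => if y == x then v else f y.

Definition rho {d : Order.disp_t} {P : finPOrderType d} (q i : nat) (f : P -> nat) : P -> nat :=
  fun x =>
    if (f x == i) && is_inc q (upd f x i.+1) then i.+1
    else if (f x == i.+1) && is_inc q (upd f x i) then i
    else f x.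

(* IncPro = rho_{q-1} o ... o rho_1 (rho_1 applied first) *)
Definition IncPro {d : Order.disp_t} {P : finPOrderType d} (q : nat) (f : P -> nat) : P -> nat :=
  foldl (fun g i => rho q i g) f (iota 1 q.-1).

Definition Con {d : Order.disp_t} {P : finPOrderType d} (q : nat) (f : P -> nat) : seq bool :=
  [seq [exists x : P, f x == i] | i <- iota 1 q].

(* Main.v *)
Require Import Defs.
From mathcomp Require Import all_boot all_order.
From mathcomp Require Import zify.
Set Implicit Arguments. Unset Strict Implicit. Unset Printing Implicit Defensive.
Import Order.TTheory.
Local Open Scope order_scope.

Lemma is_incP d (P : finPOrderType d) q (g : P -> nat) :
  reflect ((forall x, (1 <= g x <= q)%N) /\ (forall x y, x < y -> (g x < g y)%N)) (is_inc q g).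
Proof.
apply: (iffP andP) => [[/forallP H1 /forallP H2]|[H1 H2]]; split.
- by move=> x; apply: H1.
- by move=> x y lt; have /forallP/(_ y)/implyP := H2 x; apply.
- by apply/forallP.
- by apply/forallP => x; apply/forallP => y; apply/implyP; apply: H2.
Qed.

Lemma upd_inc d (P : finPOrderType d) q (g : P -> nat) x v :
  is_inc q g ->
  is_inc q (upd g x v) <-> [/\ (1 <= v <= q)%N, (forall y, x < y -> (v < g y)%N)
                            & (forall y, y < x -> (g y < v)%N)].
Proof.
move=> /is_incP [B S]; split.
- move=> /is_incP [B' S']; split.
  + by have := B' x; rewrite /upd eqxx.
  + by move=> y lt; have := S' x y lt; rewrite /upd eqxx (gt_eqF lt).
  + by move=> y lt; have := S' y x lt; rewrite /upd eqxx (lt_eqF lt).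
- case=> Bv Sv Sv'; apply/is_incP; split.
  + by move=> y; rewrite /upd; case: eqP => _.
  + move=> y z lt; rewrite /upd; move: lt.
    case: (eqVneq y x) => [->|nyx]; case: (eqVneq z x) => [->|nzx].
    * by rewrite ltxx.
    * by apply: Sv.
    * by apply: Sv'.
    * by apply: S.
Qed.

Definition cont d (P : finPOrderType d) (g : P -> nat) j := [exists x, g x == j].

Lemma rho_vals d (P : finPOrderType d) q i (g : P -> nat) x :
  rho q i g x = g x \/ exists v, [/\ rho q i g x = v, is_inc q (upd g x v) &
     ((g x = i) /\ (v = i.+1)) \/ ((g x = i.+1) /\ (v = i))].
Proof.
rewrite /rho; case: ifP => [/andP[/eqP gx U]|_].
  by right; exists i.+1; split => //; left.
case: ifP => [/andP[/eqP gx U]|_]; last by left.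
by right; exists i; split => //; right.
Qed.

Lemma rho_inc d (P : finPOrderType d) q i (g : P -> nat) :
  (0 < i < q)%N -> is_inc q g -> is_inc q (rho q i g).
Proof.
move=> hi inc; have /is_incP [B S] := inc.
apply/is_incP; split.
- move=> x; case: (rho_vals q i g x) => [->|[v [-> U _]]]; first exact: B.
  by case: (upd_inc x v inc) => /(_ U) [].
- move=> x y lt; have gxy := S x y lt.
  case: (rho_vals q i g x) => [->|[v [-> U Hv]]];
  case: (rho_vals q i g y) => [->|[w [-> W Hw]]] //.
  + by case: (upd_inc y w inc) => /(_ W) [_ _ h] _; apply: h.
  + by case: (upd_inc x v inc) => /(_ U) [_ h _] _; apply: h.
  + case: (upd_inc x v inc) => /(_ U) [_ /(_ y lt) h1 _] _.
    case: (upd_inc y w inc) => /(_ W) [_ _ /(_ x lt) h2] _.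
    lia.
Qed.

Lemma rho_other d (P : finPOrderType d) q i (g : P -> nat) x :
  g x != i -> g x != i.+1 -> rho q i g x = g x.
Proof. by rewrite /rho => /negbTE -> /negbTE ->. Qed.

Lemma rho_stay_i d (P : finPOrderType d) q i (g : P -> nat) x y :
  is_inc q g -> g x = i -> x < y -> g y = i.+1 -> rho q i g x = i.
Proof.
move=> inc gx lt gy; rewrite /rho gx eqxx /=.
case: ifP => [U|_].
  by case: (upd_inc x i.+1 inc) => /(_ U) [_ /(_ y lt)]; rewrite gy ltnn.
by rewrite (_ : (i == i.+1) = false) //; lia.
Qed.

Lemma rho_up d (P : finPOrderType d) q i (g : P -> nat) x :
  (0 < i < q)%N -> is_inc q g -> g x = i -> (forall y, x < y -> g y != i.+1) ->
  rho q i g x = i.+1.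
Proof.
move=> hi inc gx H; have /is_incP [B S] := inc.
rewrite /rho gx eqxx /=.
have -> // : is_inc q (upd g x i.+1).
case: (upd_inc x i.+1 inc) => _ ->; split.
- lia.
- move=> y lt; have := S x y lt; have := H y lt; lia.
- move=> y lt; have := S y x lt; lia.
Qed.

Lemma rho_stay_i1 d (P : finPOrderType d) q i (g : P -> nat) x y :
  is_inc q g -> g y = i.+1 -> x < y -> g x = i -> rho q i g y = i.+1.
Proof.
move=> inc gy lt gx; rewrite /rho gy eqxx /=.
rewrite (_ : (i.+1 == i) = false) /=; last by lia.
case: ifP => [U|//].
by case: (upd_inc y i inc) => /(_ U) [_ _ /(_ x lt)]; rewrite gx ltnn.
Qed.

Lemma rho_down d (P : finPOrderType d) q i (g : P -> nat) y :
  (0 < i < q)%N -> is_inc q g -> g y = i.+1 -> (forall x, x < y -> g x != i) ->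
  rho q i g y = i.
Proof.
move=> hi inc gy H; have /is_incP [B S] := inc.
rewrite /rho gy eqxx /=.
rewrite (_ : (i.+1 == i) = false) /=; last by lia.
have -> // : is_inc q (upd g y i).
case: (upd_inc y i inc) => _ ->; split.
- lia.
- move=> z lt; have := S y z lt; lia.
- move=> z lt; have := S z y lt; have := H z lt; lia.
Qed.

Lemma cont_rho d (P : finPOrderType d) q i (g : P -> nat) j :
  (0 < i < q)%N -> is_inc q g ->
  cont (rho q i g) j = cont g (if j == i then i.+1 else if j == i.+1 then i else j).
Proof.
move=> hi inc; rewrite /cont.
case: (eqVneq j i) => [->|nji].
  apply/existsP/existsP => [[x /eqP hx]|[y /eqP gy]].
  - case: (rho_vals q i g x) => [e|[v [e _ [[gx vv]|[gx vv]]]]].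
    + case: (boolP [exists y, g y == i.+1]) => [/existsP //|/existsP ne].
      have gx : g x = i by rewrite -e.
      have := rho_up hi inc gx; rewrite hx => h.
      suff : i = i.+1 by lia.
      by apply: h => y _; apply/negP => ey; apply: ne; exists y.
    + lia.
    + by exists x; rewrite gx.
  - case: (boolP [exists x, (x < y) && (g x == i)]) => [/existsP [x /andP [lt /eqP gx]]|/existsP ne].
      by exists x; rewrite (rho_stay_i inc gx lt gy).
    exists y; rewrite (rho_down hi inc gy) //.
    by move=> x lt; apply/negP => ex; apply: ne; exists x; rewrite lt ex.
case: (eqVneq j i.+1) => [->|nji1].
  apply/existsP/existsP => [[x /eqP hx]|[x /eqP gx]].
  - case: (rho_vals q i g x) => [e|[v [e _ [[gx vv]|[gx vv]]]]].
    + case: (boolP [exists y, g y == i]) => [/existsP //|/existsP ne].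
      have gx : g x = i.+1 by rewrite -e.
      have := rho_down hi inc gx; rewrite hx => h.
      suff : i.+1 = i by lia.
      by apply: h => y _; apply/negP => ey; apply: ne; exists y.
    + by exists x; rewrite gx.
    + lia.
  - case: (boolP [exists y, (x < y) && (g y == i.+1)]) => [/existsP [y /andP [lt /eqP gy]]|/existsP ne].
      by exists y; rewrite (rho_stay_i1 inc gy lt gx).
    exists x; rewrite (rho_up hi inc gx) //.
    by move=> y lt; apply/negP => ey; apply: ne; exists y; rewrite lt ey.
apply/existsP/existsP => [[x /eqP hx]|[x /eqP gx]]; exists x.
- case: (rho_vals q i g x) => [e|[v [e _ [[gx vv]|[gx vv]]]]]; last 2 first.
  + lia.
  + lia.
  by rewrite -e hx.
- rewrite rho_other gx //.
Qed.

Lemma fold_inv d (P : finPOrderType d) q (f : P -> nat) k :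
  (0 < q)%N -> is_inc q f -> (k <= q.-1)%N ->
  is_inc q (foldl (fun g i => rho q i g) f (iota 1 k)) /\
  forall j, (0 < j)%N -> cont (foldl (fun g i => rho q i g) f (iota 1 k)) j =
     cont f (if (j <= k)%N then j.+1 else if j == k.+1 then 1%N else j).
Proof.
move=> q0 inc; elim: k => [|k IH] hk.
  rewrite /=; split => // j j0; congr (cont f _); repeat (case: ifP => [/idP ?|/negbT ?]); lia.
have [inc' C] := IH (ltnW hk).
rewrite (_ : iota 1 k.+1 = iota 1 k ++ [:: k.+1]); last by rewrite -[k.+1]addn1 iotaD addnC.
rewrite foldl_cat /=.
have hi : (0 < k.+1 < q)%N by lia.
split; first exact: rho_inc.
move=> j j0; rewrite cont_rho // C; last by repeat (case: ifP => _).
congr (cont f _).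
(have [->|h1] := eqVneq j k.+1; last have [->|h2] := eqVneq j k.+2); rewrite ?eqxx ?(negbTE h1) ?(negbTE h2); repeat (case: ifP => [/idP ?|/negbT ?]); lia.
Qed.

Lemma map_shift (F : nat -> bool) n : forall m,
  map (fun j => F j.+1) (iota m n) = map F (iota m.+1 n).
Proof. by elim: n => [|n IH] m //=; rewrite IH. Qed.

Theorem lemma3p9 (d : Order.disp_t) (P : finPOrderType d) (q : nat) (f : P -> nat) :
  (0 < q)%N -> is_inc q f ->
  Con q (IncPro q f) = rot 1 (Con q f).
Proof.
move=> q0 inc.
have [_ C] := fold_inv q0 inc (leqnn q.-1).
have -> : Con q (IncPro q f) = map (cont (IncPro q f)) (iota 1 q) by [].
have -> : Con q f = map (cont f) (iota 1 q) by [].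
rewrite /IncPro.
case: q q0 inc C => [//|n] _ inc C.
set g := foldl _ f _ in C *.
have E1 : iota 1 n.+1 = iota 1 n ++ [:: n.+1] by rewrite -[n.+1]addn1 iotaD addnC.
have E2 : iota 1 n.+1 = 1 :: iota 2 n by [].
rewrite {1}E1 E2 map_cat cats1 map_cons rot1_cons.
rewrite C // ltnn eqxx; congr rcons.
rewrite -(map_shift (cont f) n 1); apply/eq_in_map => j; rewrite mem_iota => hj.
rewrite C; last by lia.
by rewrite (_ : (j <= n)%N = true) //; lia.
Qed.
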